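(* Every involutive Jamesian function is continuous on $[0,1]^2\setminus\{(0,0),(1,1)\}$.
   Context: Let $D=[0,1]^2\setminus\{(0,0),(1,1)\}$. A function $J\colon D\to\mathbb{R}$ is called Jamesian if it satisfies, for all $(a,b)\in D$: (a) $J(a,\tfrac12)=a$; (b) $J(a,0)=1$ for $0<a\le 1$; (c) $J(b,a)=1-J(a,b)$; (d) $J(1-b,1-a)=J(a,b)$; (e) $J(a,b)$ is a non-decreasing function of $a$ for each $0\le b\le 1$ and a strictly increasing function of $a$ for each $0<b<1$. A Jamesian function is called involutive if in addition $J(a,J(a,b))=b$ whenever $0<a<1$ and $0\le b\le 1$. *)

(* Defs.v *)
From Stdlib Require Import Reals.
Open Scope R_scope.

Definition inD (a b : R) : Prop :=
  0 <= a <= 1 /\ 0 <= b <= 1 /\ ~ (a = 0 /\ b = 0) /\ ~ (a = 1 /\ b = 1).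

(* J is modelled as a total function R -> R -> R; only its values on D matter. *)
Definition Jamesian (J : R -> R -> R) : Prop :=
  (forall a, 0 <= a <= 1 -> J a (1/2) = a) /\
  (forall a, 0 < a <= 1 -> J a 0 = 1) /\
  (forall a b, inD a b -> J b a = 1 - J a b) /\
  (forall a b, inD a b -> J (1 - b) (1 - a) = J a b) /\
  (forall a a' b, 0 <= b <= 1 -> inD a b -> inD a' b -> a <= a' -> J a b <= J a' b) /\
  (forall a a' b, 0 < b < 1 -> inD a b -> inD a' b -> a < a' -> J a b < J a' b).

Definition involutive_Jamesian (J : R -> R -> R) : Prop :=
  Jamesian J /\
  (forall a b, 0 < a < 1 -> 0 <= b <= 1 -> J a (J a b) = b).

Definition continuous_on_D (J : R -> R -> R) : Prop :=
  forall a b, inD a b ->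
  forall eps, 0 < eps -> exists delta, 0 < delta /\
    forall x y, inD x y ->
      sqrt ((x - a)^2 + (y - b)^2) < delta ->
      Rabs (J x y - J a b) < eps.

(* Main.v *)
Require Import Defs.
From Stdlib Require Import Reals Lra.
Open Scope R_scope.

Ltac dJ HJ := destruct HJ as [[Ha [Hb [Hc [Hd [He Hs]]]]] Hinv].

Lemma inD_sym a b : inD a b -> inD b a.
Proof. unfold inD; intros [? [? [? ?]]]; repeat split; try lra; tauto. Qed.

Lemma L0 J : involutive_Jamesian J -> forall b, 0 < b <= 1 -> J 0 b = 0.
Proof.
  intro HJ; pose proof HJ as HJ'; dJ HJ'; intros b Hb0.
  rewrite (Hc b 0); [rewrite Hb; lra|].
  unfold inD; repeat split; lra.
Qed.

Lemma L1 J : involutive_Jamesian J -> forall a, 0 <= a < 1 -> J a 1 = 0.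
Proof.
  intro HJ; pose proof HJ as HJ'; dJ HJ'; intros a Ha0.
  rewrite <- (Hd a 1); [|unfold inD; repeat split; lra].
  replace (1 - 1) with 0 by ring. apply (L0 J HJ); lra.
Qed.

Lemma L2 J : involutive_Jamesian J -> forall b, 0 <= b < 1 -> J 1 b = 1.
Proof.
  intro HJ; pose proof HJ as HJ'; dJ HJ'; intros b Hb0.
  rewrite (Hc b 1); [rewrite (L1 J HJ); lra|].
  unfold inD; repeat split; lra.
Qed.

Lemma Lrange J : involutive_Jamesian J -> forall x y, inD x y -> 0 <= J x y <= 1.
Proof.
  intro HJ; pose proof HJ as HJ'; dJ HJ'; intros x y HD.
  pose proof HD as [Hx [Hy [H1 H2]]].
  destruct (Req_dec y 0) as [->|Hy0].
  { rewrite Hb; [lra|]. destruct (Req_dec x 0); [subst; tauto|lra]. }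
  destruct (Req_dec y 1) as [->|Hy1].
  { rewrite (L1 J HJ); [lra|]. destruct (Req_dec x 1); [subst; tauto|lra]. }
  split.
  - rewrite <- (L0 J HJ y) by lra. apply He; try lra; auto.
    unfold inD; repeat split; lra.
  - rewrite <- (L2 J HJ y) by lra. apply He; try lra; auto.
    unfold inD; repeat split; lra.
Qed.

Lemma Lswap J : involutive_Jamesian J -> forall a b, inD a b -> J a b = 1 - J b a.
Proof. intro HJ; pose proof HJ as HJ'; dJ HJ'; intros a b H. rewrite (Hc a b H); ring. Qed.

Lemma Ldec J : involutive_Jamesian J -> forall a y y', 0 < a < 1 -> 0 <= y -> y < y' -> y' <= 1 ->
  J a y' < J a y.
Proof.
  intro HJ; pose proof HJ as HJ'; dJ HJ'; intros a y y' Ha0 H1 H2 H3.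
  rewrite (Lswap J HJ a y), (Lswap J HJ a y') by (unfold inD; repeat split; lra).
  assert (J y a < J y' a); [|lra].
  apply Hs; try lra; unfold inD; repeat split; lra.
Qed.

Lemma Lwdec J : involutive_Jamesian J -> forall a y y', 0 < a < 1 -> 0 <= y -> y <= y' -> y' <= 1 ->
  J a y' <= J a y.
Proof.
  intros HJ a y y' H0 H1 H2 H3. destruct (Req_dec y y') as [->|];[lra|].
  left; apply (Ldec J HJ); lra.
Qed.

Lemma Lg01 J : involutive_Jamesian J -> forall a y, 0 < a < 1 -> 0 <= y <= 1 -> 0 <= J a y <= 1.
Proof. intros HJ a y H H'. apply (Lrange J HJ); unfold inD; repeat split; lra. Qed.

Lemma Lrc J : involutive_Jamesian J -> forall a b c, 0 < a < 1 -> 0 <= b < 1 -> c < J a b ->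
  exists b', b < b' < 1 /\ c < J a b'.
Proof.
  intro HJ; pose proof HJ as HJ'; dJ HJ'; intros a b c Ha0 Hb0 Hcb.
  destruct (Rlt_dec c 0).
  { exists ((b+1)/2). split; [lra|]. pose proof (Lg01 J HJ a ((b+1)/2)); lra. }
  pose proof (Lg01 J HJ a b Ha0 ltac:(lra)).
  set (t := (c + J a b)/2).
  exists (J a t).
  assert (Hinvb : J a (J a b) = b) by (apply Hinv; lra).
  assert (Hinvt : J a (J a t) = t) by (apply Hinv; unfold t; lra).
  split; [split|].
  - rewrite <- Hinvb at 1. apply (Ldec J HJ); unfold t; lra.
  - rewrite <- (Hb a) by lra. apply (Ldec J HJ); unfold t; lra.
  - rewrite Hinvt; unfold t; lra.
Qed.

Lemma Llc J : involutive_Jamesian J -> forall b a c, 0 < b < 1 -> 0 < a <= 1 -> J b a < c ->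
  exists x, 0 < x < a /\ J b x < c.
Proof.
  intro HJ; pose proof HJ as HJ'; dJ HJ'; intros b a c Hb0 Ha0 Hc0.
  destruct (Rlt_dec 1 c).
  { exists (a/2). split; [lra|]. pose proof (Lg01 J HJ b (a/2)); lra. }
  pose proof (Lg01 J HJ b a Hb0 ltac:(lra)).
  set (t := (c + J b a)/2).
  exists (J b t).
  assert (Hinva : J b (J b a) = a) by (apply Hinv; lra).
  assert (Hinvt : J b (J b t) = t) by (apply Hinv; unfold t; lra).
  split; [split|].
  - rewrite <- (L1 J HJ b) by lra. apply (Ldec J HJ); unfold t; lra.
  - rewrite <- Hinva at 1. apply (Ldec J HJ); unfold t; lra.
  - rewrite Hinvt; unfold t; lra.
Qed.

Lemma LSC J : involutive_Jamesian J -> forall a b, inD a b -> forall eps, 0 < eps ->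
  exists delta, 0 < delta /\ forall x y, inD x y -> Rabs (x - a) < delta -> Rabs (y - b) < delta ->
  J a b - eps < J x y.
Proof.
  intro HJ; pose proof HJ as HJ'; dJ HJ'; intros a b HD eps Heps.
  pose proof HD as [Hx [Hy [H1 H2]]].
  pose proof (Lrange J HJ a b HD).
  destruct (Rlt_dec (J a b - eps) 0).
  { exists 1; split; [lra|]. intros x y HD' _ _. pose proof (Lrange J HJ x y HD'); lra. }
  assert (Ha0 : 0 < a).
  { destruct (Req_dec a 0) as [->|]; [|lra]. assert (J 0 b = 0); [|lra].
    apply (L0 J HJ). destruct (Req_dec b 0); [subst; tauto|lra]. }
  assert (Hb1 : b < 1).
  { destruct (Req_dec b 1) as [->|]; [|lra]. assert (J a 1 = 0); [|lra].
    apply (L1 J HJ). destruct (Req_dec a 1); [subst; tauto|lra]. }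
  set (c := J a b - eps).
  assert (Hb' : exists b', b < b' < 1 /\ c < J a b').
  { destruct (Req_dec a 1) as [->|].
    - exists ((b+1)/2). rewrite (L2 J HJ) by lra. unfold c; split; lra.
    - apply (Lrc J HJ); unfold c; lra. }
  destruct Hb' as [b' [Hbb' Hcb']].
  rewrite (Lswap J HJ a b') in Hcb' by (unfold inD; repeat split; lra).
  destruct (Llc J HJ b' a (1 - c)) as [x0 [Hx0 Hx0c]]; try lra.
  exists (Rmin (a - x0) (b' - b)). split.
  { apply Rmin_pos; lra. }
  intros x y HDxy Hxa Hyb.
  pose proof (Rmin_l (a - x0) (b' - b)). pose proof (Rmin_r (a - x0) (b' - b)).
  apply Rabs_def2 in Hxa. apply Rabs_def2 in Hyb.
  pose proof HDxy as [Hx' [Hy' _]].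
  assert (J x0 b' > c).
  { rewrite (Lswap J HJ x0 b') by (unfold inD; repeat split; lra). lra. }
  assert (J x0 b' <= J x0 y) by (apply (Lwdec J HJ); lra).
  assert (J x0 y <= J x y).
  { apply He; try lra; auto. unfold inD; repeat split; lra. }
  fold c; lra.
Qed.

Lemma abs_le_norm u v : Rabs u <= sqrt (u^2 + v^2).
Proof.
  rewrite <- (sqrt_pow2 (Rabs u)) by apply Rabs_pos.
  apply sqrt_le_1_alt. rewrite pow2_abs. pose proof (pow2_ge_0 v). lra.
Qed.

Theorem proposition5p2 (J : R -> R -> R) :
  involutive_Jamesian J -> continuous_on_D J.
Proof.
  intros HJ a b HD eps Heps.
  destruct (LSC J HJ a b HD eps Heps) as [d1 [Hd1 H1]].
  destruct (LSC J HJ b a (inD_sym _ _ HD) eps Heps) as [d2 [Hd2 H2]].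
  exists (Rmin d1 d2). split; [apply Rmin_pos; lra|].
  intros x y HDxy Hn.
  pose proof (Rmin_l d1 d2). pose proof (Rmin_r d1 d2).
  pose proof (abs_le_norm (x - a) (y - b)).
  assert (Rabs (y - b) <= sqrt ((x - a)^2 + (y - b)^2)).
  { rewrite Rplus_comm. apply abs_le_norm. }
  assert (J a b - eps < J x y) by (apply H1; auto; lra).
  assert (J b a - eps < J y x) by (apply H2; auto using inD_sym; lra).
  rewrite (Lswap J HJ b a) in * by (apply inD_sym; auto).
  rewrite (Lswap J HJ y x) in * by (apply inD_sym; auto).
  apply Rabs_def1; lra.
Qed.
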